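(* Let $\mu,\nu$ be Radon measures on $\mathbb{R}$ and $I\subset\mathbb{R}$ an interval. Then $\alpha_{s,\mu,\nu}(I)\le 2$, and, whenever $\nu(I)>0$ and $\int\varphi\,d\nu_I>0$, $$\alpha_{s,\mu,\nu}(I)\le\frac{2\alpha_{\mu,\nu}(I)}{\int\varphi\,d\nu_I}.$$ Moreover, if $\nu$ is globally doubling with constant $D$ ($\nu(B(x,2r))\le D\nu(B(x,r))$ for all $x,r$), and $I\subset J\subset\mathbb{R}$ are intervals with $|I|\ge\theta|J|$ for some $\theta>0$, then $\alpha_{s,\mu,\nu}(I)\le C\,\alpha_{s,\mu,\nu}(J)$ for a constant $C$ depending only on $D$ and $\theta$.
   Context: Wasserstein distance: $\mathbb{W}_1(\nu_1,\nu_2) := \sup_\psi |\int\psi\,d\nu_1 - \int\psi\,d\nu_2|$ over all $1$-Lipschitz $\psi\colon\mathbb{R}\to\mathbb{R}$ supported on $[0,1]$. For an interval $I$, $T_I$ is the increasing affine map taking $\overline I$ onto $[0,1]$; $\mu_I := T_{I\sharp}(\mu|_I)/\mu(I)$, $\nu_I := T_{I\sharp}(\nu|_I)/\nu(I)$ (zero if the mass vanishes), $\alpha_{\mu,\nu}(I) := \mathbb{W}_1(\mu_I,\nu_I)$. Let $\varphi(x) := \operatorname{dist}(x,\mathbb{R}\setminus(0,1))$, $\varphi_I := \varphi\circ T_I$. Smooth $\alpha$-numbers: $\alpha_{s,\mu,\nu}(I) := \mathbb{W}_1(\mu_{\varphi,I},\nu_{\varphi,I})$, where $\mu_{\varphi,I}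 := T_{I\sharp}(\mu|_I)/\int\varphi_I\,d\mu$ and $\nu_{\varphi,I} := T_{I\sharp}(\nu|_I)/\int\varphi_I\,d\nu$, with $\mu_{\varphi,I}:\equiv0$ if $\int\varphi_I\,d\mu=0$ (similarly for $\nu$). *)

(* Defs.v *)
From mathcomp Require Import all_boot all_order all_algebra.
From mathcomp Require Import all_classical all_reals all_analysis.
Import Order.TTheory GRing.Theory Num.Theory.

Set Implicit Arguments.
Unset Strict Implicit.
Unset Printing Implicit Defensive.

Local Open Scope classical_set_scope.
Local Open Scope ring_scope.

(* A bounded interval with endpoints a < b; l (resp. r) says whether the
   left (resp. right) endpoint is included. *)
Definition bitv (R : realType) (l r : bool) (a b : R) : set R :=
  [set` Interval (BSide l a) (BSide (~~ r) b)].

Definition Taff (R : realType) (a b : R) (x : R) : R := (x - a) / (b - a).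

(* phi(x) = dist(x, R \ (0,1)). *)
Definition phi (R : realType) (x : R) : R := Num.max 0 (Num.min x (1 - x)).

Definition radon (R : realType) (mu : {measure set R -> \bar R}) : Prop :=
  forall a b : R, (mu [set` `[a, b]] < +oo)%E.

Definition Lip1 (R : realType) : set (R -> R) :=
  [set psi | (forall x y : R, `|psi x - psi y| <= `|x - y|) /\
             (forall x : R, ~ (0 <= x <= 1) -> psi x = 0)].

(* The functional psi |-> int psi d( T_# (mu|_A) / c ), with the convention
   that it is 0 if c = 0. *)
Definition nint (R : realType) (mu : {measure set R -> \bar R}) (A : set R)
  (T : R -> R) (c : \bar R) (psi : R -> R) : \bar R :=
  if c == 0%E then 0%E
  else ((fine c)^-1%:E * \int[mu]_(x in A) (psi (T x))%:E)%E.

(* W_1 between two measures, given through their integral functionals. *)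
Definition W1 (R : realType) (F G : (R -> R) -> \bar R) : \bar R :=
  ereal_sup [set `|(F psi - G psi)%E|%E | psi in @Lip1 R].

Definition muI (R : realType) (mu : {measure set R -> \bar R})
  (l r : bool) (a b : R) : (R -> R) -> \bar R :=
  nint mu (bitv l r a b) (Taff a b) (mu (bitv l r a b)).

Definition intphiI (R : realType) (mu : {measure set R -> \bar R})
  (a b : R) : \bar R := (\int[mu]_x (phi (Taff a b x))%:E)%E.

Definition muphiI (R : realType) (mu : {measure set R -> \bar R})
  (l r : bool) (a b : R) : (R -> R) -> \bar R :=
  nint mu (bitv l r a b) (Taff a b) (intphiI mu a b).

Definition alpha (R : realType) (mu nu : {measure set R -> \bar R})
  (l r : bool) (a b : R) : \bar R :=
  W1 (muI mu l r a b) (muI nu l r a b).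

Definition alpha_s (R : realType) (mu nu : {measure set R -> \bar R})
  (l r : bool) (a b : R) : \bar R :=
  W1 (muphiI mu l r a b) (muphiI nu l r a b).

Definition doubling (R : realType) (nu : {measure set R -> \bar R}) (D : R) :=
  forall (x r : R), 0 < r ->
    (nu [set y : R | (`|x - y| < 2 * r)%R] <= D%:E * nu [set y : R | (`|x - y| < r)%R])%E.

(* Main.v *)
Require Import Defs.
From mathcomp Require Import all_boot all_order all_algebra.
From mathcomp Require Import all_classical all_reals all_analysis.
From mathcomp Require Import ring lra measurable_realfun.
Import Order.TTheory GRing.Theory Num.Theory.
Import numFieldNormedType.Exports.
Local Open Scope classical_set_scope.
Local Open Scope ring_scope.

Set Implicit Arguments. Unset Strict Implicit. Unset Printing Implicit Defensive.
Section S.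
Variable R : realType.

Lemma phi_cases (t : R) : (phi t = 0 /\ (t <= 0 \/ 1 <= t)) \/ (phi t = t /\ 0 <= t <= 1/2) \/ (phi t = 1 - t /\ 1/2 <= t <= 1).
Proof.
rewrite /phi.
case: (leP t (1 - t)) => h1.
  case: (leP 0 t) => h2.
    by right; left; split => //; apply/andP; split; lra.
  by left; split => //; left; lra.
case: (leP 0 (1 - t)) => h2.
  by right; right; split => //; apply/andP; split; lra.
by left; split => //; right; lra.
Qed.

Lemma phi_ge0 t : 0 <= phi t :> R.
Proof. case: (phi_cases t) => [[-> _]|[[-> ?]|[-> ?]]]; lra. Qed.

Lemma phi_le_half t : phi t <= 1/2 :> R.
Proof. case: (phi_cases t) => [[-> _]|[[-> ?]|[-> ?]]]; lra. Qed.

Lemma phi_lip (x y : R) : `|phi x - phi y| <= `|x - y|.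
Proof.
have h1 : x - y <= `|x - y| by apply: ler_norm.
have h2 : y - x <= `|x - y| by rewrite distrC; apply: ler_norm.
rewrite ler_norml.
case: (phi_cases x) => [[-> ?]|[[-> ?]|[-> ?]]];
case: (phi_cases y) => [[-> ?]|[[-> ?]|[-> ?]]]; apply/andP; split; lra.
Qed.

Lemma phi_Lip1 : Lip1 (@phi R).
Proof.
split; first exact: phi_lip.
move=> x hx; case: (phi_cases x) => [[-> //]|[[-> ?]|[-> ?]]]; exfalso; apply: hx; apply/andP; split; lra.
Qed.

Lemma Lip1_le_phi psi : Lip1 psi -> forall t : R, `|psi t| <= phi t.
Proof.
move=> [Hl Hs] t.
have [t01|tn] := boolP (0 <= t <= 1); last first.
  rewrite Hs; last by move=> h; rewrite h in tn.
  by rewrite normr0 phi_ge0.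
case/andP: t01 => t0 t1.
have ha : `|psi t| <= t.
  apply/ler_addgt0Pr => e e0.
  have := Hl t (- e); rewrite (Hs (- e)); last by move=> /andP[h _]; lra.
  rewrite subr0 opprK (ger0_norm (x := t + e)) //; lra.
have hb : `|psi t| <= 1 - t.
  apply/ler_addgt0Pr => e e0.
  have := Hl t (1 + e); rewrite (Hs (1 + e)); last by move=> /andP[_ h]; lra.
  rewrite subr0 (ler0_norm (x := t - (1 + e))); lra.
case: (phi_cases t) => [[-> [?|?]]|[[-> ?]|[-> ?]]]; lra.
Qed.

Lemma lip_cont (f : R -> R) (K : R) : 0 <= K -> (forall x y, `|f x - f y| <= K * `|x - y|) -> continuous f.
Proof.
move=> K0 Hf x; apply/cvgrPdist_lt => e e0.
apply/nbhs_ballP; exists (e / (K + 1)) => /=; first by apply: divr_gt0; lra.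
move=> y; rewrite /ball /= => hy.
apply: (le_lt_trans (Hf x y)).
have hK : 0 < K + 1 by lra.
have : `|x - y| * (K + 1) < e by rewrite -ltr_pdivlMr.
have := normr_ge0 (x - y). nra.
Qed.

Lemma Taff_lip (a b x y : R) : a < b -> `|Taff a b x - Taff a b y| = (b - a)^-1 * `|x - y|.
Proof.
move=> ab; rewrite /Taff -mulrBl normrM mulrC gtr0_norm; last by rewrite invr_gt0 subr_gt0.
by congr (_ * `|_|); rewrite opprB addrA subrK.
Qed.

Definition good (a b : R) (g : R -> R) :=
  [/\ continuous g, (forall x, `|g x| <= 1) & (forall x, ~ (a < x < b) -> g x = 0)].

Lemma phi_out t : (t <= 0 \/ 1 <= t) -> phi t = 0 :> R.
Proof. move=> h; case: (phi_cases t) => [[-> //]|[[-> ?]|[-> ?]]]; case: h; lra. Qed.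

Lemma Lip1_good psi a b : a < b -> Lip1 psi -> good a b (psi \o Taff a b).
Proof.
move=> ab hpsi; have [Hl Hs] := hpsi.
have ba : 0 < b - a by lra.
split.
- apply: (@lip_cont _ (b - a)^-1); first by rewrite invr_ge0; lra.
  by move=> x y /=; rewrite -Taff_lip.
- move=> x /=; have := Lip1_le_phi hpsi (Taff a b x); have := phi_le_half (Taff a b x); lra.
- move=> x hx /=.
  have : `|psi (Taff a b x)| <= 0.
    rewrite -(@phi_out (Taff a b x)); first exact: Lip1_le_phi.
    rewrite /Taff.
    case: (leP x a) => h1.
      left; rewrite pmulr_lle0 ?invr_gt0 //; lra.
    case: (leP b x) => h2.
      right; rewrite ler_pdivlMr //; lra.
    by exfalso; apply: hx; apply/andP; split.
  by rewrite normr_le0 => /eqP.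
Qed.

Lemma Lip1N psi : Lip1 psi -> Lip1 (fun x => - psi x :> R).
Proof.
move=> [Hl Hs]; split.
  by move=> x y; rewrite -opprD normrN; apply: Hl.
by move=> x hx; rewrite Hs // oppr0.
Qed.

Section Meas.
Variable mu : {measure set R -> \bar R}.
Hypothesis rad : radon mu.

Lemma good_int a b g : good a b g -> mu.-integrable setT (EFin \o g).
Proof.
move=> [gc gb gz].
have mK : measurable [set` `[a, b]] by apply: measurable_itv.
have h : mu.-integrable [set` `[a, b]] (EFin \o g).
  apply: measurable_bounded_integrable => //.
  - by apply: measurable_funS (continuous_measurable_fun gc).
  - rewrite /bounded_near; near=> M => x _; apply: (le_trans (gb x)).
    near: M; exact: nbhs_pinfty_ge.
have := (integrable_mkcond _ mK).1 h.
suff -> : ((EFin \o g) \_ [set` `[a, b]]) = EFin \o g by [].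
apply/funext => x; rewrite /patch; case: ifPn => // hx.
rewrite /= gz //.
move=> /andP[h1 h2]; move: hx; rewrite mem_set //= in_itv /=.
by rewrite !ltW.
Unshelve. all: by end_near.
Qed.

Definition Eg (g : R -> R) : R := fine (\int[mu]_x (g x)%:E).

Lemma EgE a b g : good a b g -> (\int[mu]_x (g x)%:E = (Eg g)%:E)%E.
Proof. by move=> hg; rewrite fineK // (integrable_fin_num _ (good_int hg)). Qed.

Lemma Eg_sub a b g (A : set R) : good a b g -> (forall x, a < x < b -> A x) ->
  (\int[mu]_(x in A) (g x)%:E = (Eg g)%:E)%E.
Proof.
move=> hg hA; rewrite -(EgE hg) integral_mkcond; congr (integral _ _ _).
apply/funext => x; rewrite /patch; case: ifPn => // hx.
have [_ _ gz] := hg; rewrite gz // => hab; move: hx; rewrite mem_set //.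
exact: hA.
Qed.

Lemma Eg_le a b a' b' g1 g2 : good a b g1 -> good a' b' g2 -> (forall x, g1 x <= g2 x) -> Eg g1 <= Eg g2.
Proof.
move=> h1 h2 le12; rewrite -lee_fin -(EgE h1) -(EgE h2).
apply: le_integral => //; [exact: good_int h1|exact: good_int h2|].
by move=> x _; rewrite lee_fin.
Qed.

Lemma Eg_Z a b g k : good a b g -> Eg (fun x => k * g x) = k * Eg g.
Proof.
move=> hg; rewrite /Eg.
under eq_integral do rewrite EFinM.
by rewrite integralZl //; [rewrite (EgE hg)|exact: good_int hg].
Qed.

End Meas.
Definition Phi (c v : R) : R := if c == 0 then 0 else v / c.
Section Meas2.
Variable mu : {measure set R -> \bar R}.
Hypothesis rad : radon mu.

Lemma meas_indicM (B : set R) (k : R) : measurable B ->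
  measurable_fun setT (fun x => (k * \1_B x)%:E).
Proof.
move=> mB; apply/measurable_EFinP; apply: measurable_funM => //.
Qed.

Lemma Eg_le_meas a b g (B : set R) (k : R) : good a b g -> measurable B -> 0 <= k ->
  (forall x, 0 <= g x) -> (forall x, ~ B x -> g x = 0) -> (forall x, g x <= k) ->
  ((Eg mu g)%:E <= k%:E * mu B)%E.
Proof.
move=> hg mB k0 g0 gB gk.
rewrite -(EgE rad hg).
have -> : (k%:E * mu B = \int[mu]_x (k * \1_B x)%:E)%E.
  under eq_integral do rewrite EFinM.
  rewrite ge0_integralZl_EFin //.
  - by rewrite integral_indic // setIT.
  - apply/measurable_EFinP; exact: measurable_indic.
apply: (ge0_le_integral mu measurableT).
- by move=> x _; rewrite lee_fin.
- exact: (measurable_int _ (good_int rad hg)).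
- exact: meas_indicM.
- move=> x _; rewrite lee_fin indicE.
  case: (boolP (x \in B)) => [_|/negP hx]; first by rewrite mulr1.
  by rewrite gB ?mulr0 // => h; apply: hx; rewrite mem_set.
Qed.

Lemma Eg_ge_meas a b g (B : set R) (k : R) : good a b g -> measurable B -> 0 <= k ->
  (forall x, 0 <= g x) -> (forall x, B x -> k <= g x) ->
  (k%:E * mu B <= (Eg mu g)%:E)%E.
Proof.
move=> hg mB k0 g0 gB.
rewrite -(EgE rad hg).
have -> : (k%:E * mu B = \int[mu]_x (k * \1_B x)%:E)%E.
  under eq_integral do rewrite EFinM.
  rewrite ge0_integralZl_EFin //.
  - by rewrite integral_indic // setIT.
  - apply/measurable_EFinP; exact: measurable_indic.
apply: (ge0_le_integral mu measurableT).
- by move=> x _; rewrite lee_fin mulr_ge0.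
- exact: meas_indicM.
- exact: (measurable_int _ (good_int rad hg)).
- move=> x _; rewrite lee_fin indicE.
  case: (boolP (x \in B)) => [/set_mem hx|hx]; first by rewrite mulr1 gB.
  by rewrite mulr0.
Qed.



Lemma bitv_in l r (a b x : R) : a < x < b -> bitv l r a b x.
Proof.
move=> /andP[h1 h2]; rewrite /bitv /= in_itv /=.
by case: l; case: r => /=; rewrite ?h1 ?h2 ?ltW.
Qed.

Lemma muphiI_E l r a b psi : a < b -> Lip1 psi ->
  muphiI mu l r a b psi = (Phi (Eg mu (@phi R \o Taff a b)) (Eg mu (psi \o Taff a b)))%:E.
Proof.
move=> ab hpsi.
rewrite /muphiI /nint /intphiI /Phi.
have := EgE rad (Lip1_good ab phi_Lip1); rewrite /comp => ->.
rewrite eqe; case: ifP => // _.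
rewrite (Eg_sub rad (Lip1_good ab hpsi)); last by move=> x; exact: bitv_in.
by rewrite /= -EFinM mulrC.
Qed.

Lemma bitv_sub l r (a b : R) : bitv l r a b `<=` [set` `[a, b]].
Proof.
move=> x; rewrite /bitv /= !in_itv /=.
by case: l; case: r => /= /andP[h1 h2]; rewrite ?h1 ?h2 ?ltW.
Qed.

Lemma bitv_meas l r (a b : R) : measurable (bitv l r a b).
Proof. exact: measurable_itv. Qed.

Lemma bitv_fin l r (a b : R) : mu (bitv l r a b) = (fine (mu (bitv l r a b)))%:E.
Proof.
rewrite fineK // ge0_fin_numE //.
apply: (le_lt_trans _ (rad a b)); apply: le_measure; rewrite ?inE; last exact: bitv_sub.
- exact: bitv_meas.
- exact: measurable_itv.
Qed.

Lemma muI_E l r a b psi : a < b -> Lip1 psi ->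
  muI mu l r a b psi = (Phi (fine (mu (bitv l r a b))) (Eg mu (psi \o Taff a b)))%:E.
Proof.
move=> ab hpsi.
rewrite /muI /nint /Phi.
rewrite {1}bitv_fin eqe; case: ifP => // _.
rewrite (Eg_sub rad (Lip1_good ab hpsi)); last by move=> x; exact: bitv_in.
by rewrite /= -EFinM mulrC.
Qed.

End Meas2.
Lemma Phi_le1 (c v : R) : `|v| <= c -> `|Phi c v| <= 1.
Proof.
move=> h; rewrite /Phi; case: ifPn => [_|c0]; first by rewrite normr0.
have c0' : 0 < c by rewrite lt_def c0 /= (le_trans (normr_ge0 _) h).
by rewrite normrM normfV (gtr0_norm c0') ler_pdivrMr // mul1r.
Qed.

Lemma Phi_nz (c v : R) : c != 0 -> Phi c v = v / c.
Proof. by rewrite /Phi => /negPf ->. Qed.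

Lemma part2_real (vm cm sm vn cn sn : R) :
  `|vm| <= cm -> cm <= sm -> `|vn| <= cn -> 0 < sn -> 0 < Phi sn cn ->
  `|Phi cm vm - Phi cn vn| <=
    (2 / Phi sn cn) * Num.max `|Phi sm vm - Phi sn vn| `|Phi sm cm - Phi sn cn|.
Proof.
move=> hm hcs hn sn0 n0.
have sn0' : sn != 0 by rewrite gt_eqF.
have cm0 : 0 <= cm := le_trans (normr_ge0 _) hm.
have cn0 : 0 <= cn := le_trans (normr_ge0 _) hn.
move: n0; rewrite (Phi_nz _ sn0') => n0.
have cn0' : 0 < cn.
  rewrite lt_def cn0 andbT; apply/negP => /eqP c0; move: n0; rewrite c0 mul0r; lra.
have cnz : cn != 0 by rewrite gt_eqF.
rewrite (Phi_nz vn cnz) (Phi_nz vn sn0') ?(Phi_nz cn sn0').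
have hq : 0 < 2 / (cn / sn) by apply: divr_gt0.
have e2 : 2 / (cn / sn) = 2 * (sn / cn) by field; apply/andP; split.
have hsc : 0 < sn / cn by apply: divr_gt0.
have [cm0'|cm0'] := eqVneq cm 0.
  have vm0 : vm = 0 by apply/normr0_eq0/eqP; rewrite eq_le normr_ge0 -cm0' hm.
  have -> : Phi cm vm = 0 by rewrite /Phi cm0' eqxx.
  have eA2 : `|Phi sm cm - cn / sn| = cn / sn.
    rewrite /Phi cm0' mul0r; case: ifP => _; rewrite sub0r normrN gtr0_norm //.
  have hM2 : `|Phi sm cm - cn / sn| <= Num.max `|Phi sm vm - vn / sn| `|Phi sm cm - cn / sn|.
    by rewrite le_max lexx orbT.
  have hv : `|vn / cn| <= 1 by have := Phi_le1 hn; rewrite (Phi_nz _ cnz).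
  rewrite sub0r normrN (le_trans hv) // (le_trans _ (ler_wpM2l (ltW hq) hM2)) // eA2.
  by rewrite divfK ?gt_eqF //; lra.
have cmp : 0 < cm by rewrite lt_def cm0' andTb.
have smp : 0 < sm by lra.
have smz : sm != 0 by rewrite gt_eqF.
rewrite (Phi_nz _ cm0') (Phi_nz vm smz) (Phi_nz cm smz).
have key : vm / cm - vn / cn = (sn / cn) * ((vm / sm - vn / sn) + (vm / cm) * (cn / sn - cm / sm)).
  by field; rewrite cm0' cnz smz sn0'.
have hv : `|vm / cm| <= 1 by have := Phi_le1 hm; rewrite (Phi_nz _ cm0').
rewrite key normrM (gtr0_norm hsc) e2.
have hZ : `|cn / sn - cm / sm| = `|cm / sm - cn / sn| by rewrite distrC.
have h1 : `|(vm / sm - vn / sn) + (vm / cm) * (cn / sn - cm / sm)| <= `|vm / sm - vn / sn| + `|cn / sn - cm / sm|.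
  apply: (le_trans (ler_normD _ _)); rewrite lerD2l normrM.
  by rewrite -[leRHS]mul1r ler_wpM2r.
have hM1 : `|vm / sm - vn / sn| <= Num.max `|vm / sm - vn / sn| `|cm / sm - cn / sn| by rewrite le_max lexx.
have hM2 : `|cm / sm - cn / sn| <= Num.max `|vm / sm - vn / sn| `|cm / sm - cn / sn| by rewrite le_max lexx orbT.
apply: (le_trans (ler_wpM2l (ltW hsc) h1)).
have h3 : `|vm / sm - vn / sn| + `|cn / sn - cm / sm| <= 2 * Num.max `|vm / sm - vn / sn| `|cm / sm - cn / sn| by rewrite hZ; lra.
have := ler_wpM2l (ltW hsc) h3; lra.
Qed.
Lemma Phi_v0 (c : R) : Phi c 0 = 0.
Proof. by rewrite /Phi mul0r; case: ifP. Qed.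

Lemma Phi_scale (k c v : R) : k != 0 -> Phi (k * c) (k * v) = Phi c v.
Proof.
move=> k0; rewrite /Phi mulf_eq0 (negPf k0) /=; case: ifPn => // c0.
by rewrite invfM mulrACA mulfV // mul1r.
Qed.

Lemma part3_real (Xm Ym cm Xn Yn cn L : R) :
  `|Xm| <= Ym -> Ym <= cm -> `|Xn| <= Yn -> Yn <= cn -> cn <= L * Yn -> 1 <= L ->
  `|Phi Ym Xm - Phi Yn Xn| <= (2 * L) *
     Num.max `|Phi cm Xm - Phi cn Xn|
       (Num.max `|Phi cm Ym - Phi cn Yn| `|Phi cm cm - Phi cn cn|).
Proof.
move=> hXm hYm hXn hYn hL L1.
set A1 := `|Phi cm Xm - Phi cn Xn|.
set A2 := `|Phi cm Ym - Phi cn Yn|.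
set A3 := `|Phi cm cm - Phi cn cn|.
have hA1 : A1 <= Num.max A1 (Num.max A2 A3) by rewrite le_max lexx.
have hA2 : A2 <= Num.max A1 (Num.max A2 A3) by rewrite !le_max lexx orbT.
have hA3 : A3 <= Num.max A1 (Num.max A2 A3) by rewrite !le_max lexx !orbT.
have A10 : 0 <= A1 by apply: normr_ge0.
have Ym0 : 0 <= Ym := le_trans (normr_ge0 _) hXm.
have Yn0 : 0 <= Yn := le_trans (normr_ge0 _) hXn.
have [cn0|cn0] := eqVneq cn 0.
  have Yn0' : Yn = 0 by lra.
  have Xn0 : Xn = 0 by apply/normr0_eq0; have := normr_ge0 Xn; lra.
  rewrite Yn0' Xn0 Phi_v0 subr0.
  have [cm0|cm0] := eqVneq cm 0.
    have -> : Ym = 0 by lra.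
    by rewrite /Phi eqxx normr0 mulr_ge0 //; lra.
  have hR := Phi_le1 hXm.
  have eA3 : A3 = 1 by rewrite /A3 cn0 /Phi (negPf cm0) eqxx mulfV // subr0 normr1.
  nra.
have cnp : 0 < cn by rewrite lt_def cn0 andTb; lra.
have Ynp : 0 < Yn.
  rewrite lt_def Yn0 andbT; apply/negP => /eqP h; move: hL; rewrite h mulr0; lra.
have Ynz : Yn != 0 by rewrite gt_eqF.
have hRn := Phi_le1 hXn.
have hQn : 1 <= L * (Yn / cn).
  by rewrite mulrA ler_pdivlMr // mul1r.
have [Ym00|Ym00] := eqVneq Ym 0.
  have Xm0 : Xm = 0 by apply/normr0_eq0; have := normr_ge0 Xm; lra.
  rewrite Ym00 Xm0 Phi_v0 sub0r normrN.
  have eA2 : A2 = Yn / cn.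
    by rewrite /A2 Ym00 Phi_v0 sub0r normrN /Phi (negPf cn0) ger0_norm // divr_ge0 //; lra.
  nra.
have Ymp : 0 < Ym by rewrite lt_def Ym00 andTb.
have cmp : 0 < cm by lra.
have cmz : cm != 0 by rewrite gt_eqF.
rewrite /A1 /A2 /A3 !Phi_nz // in hA1 hA2 hA3 *.
have key : Xm / Ym - Xn / Yn = (cn / Yn) * ((Xm / cm - Xn / cn) + (Xm / Ym) * (Yn / cn - Ym / cm)).
  by field; rewrite cmz cn0 Ynz Ym00.
have hv : `|Xm / Ym| <= 1 by have := Phi_le1 hXm; rewrite (Phi_nz _ Ym00).
have hcy : 0 < cn / Yn by apply: divr_gt0.
have hcyL : cn / Yn <= L by rewrite ler_pdivrMr.
rewrite key normrM (gtr0_norm hcy).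
have hZ : `|Yn / cn - Ym / cm| = `|Ym / cm - Yn / cn| by rewrite distrC.
have h1 : `|(Xm / cm - Xn / cn) + (Xm / Ym) * (Yn / cn - Ym / cm)| <= `|Xm / cm - Xn / cn| + `|Yn / cn - Ym / cm|.
  apply: (le_trans (ler_normD _ _)); rewrite lerD2l normrM.
  by rewrite -[leRHS]mul1r ler_wpM2r.
set M := Num.max _ _ in hA1 hA2 hA3 *.
have M0 : 0 <= M by apply: le_trans hA1; apply: normr_ge0.
have h3 : `|Xm / cm - Xn / cn| + `|Yn / cn - Ym / cm| <= 2 * M by rewrite hZ; lra.
apply: (le_trans (ler_wpM2l (ltW hcy) h1)).
apply: (le_trans (ler_wpM2l (ltW hcy) h3)).
have := ler_wpM2r (mulr_ge0 (ler0n _ 2) M0) hcyL; lra.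
Qed.
Lemma W1_ge (F G : (R -> R) -> \bar R) psi : Lip1 psi -> (`|F psi - G psi| <= W1 F G)%E.
Proof. by move=> h; apply: ereal_sup_ubound; exists psi. Qed.

Lemma Eg_abs_le (mu : {measure set R -> \bar R}) a b psi : radon mu -> a < b -> Lip1 psi ->
  `|Eg mu (psi \o Taff a b)| <= Eg mu (@phi R \o Taff a b).
Proof.
move=> rad ab hpsi.
have gp := Lip1_good ab hpsi; have gf := Lip1_good ab phi_Lip1.
rewrite ler_norml; apply/andP; split.
  rewrite -mulN1r -(@Eg_Z mu rad a b _ (-1) gf).
  have -> : (fun x => -1 * (@phi R \o Taff a b) x) = (fun x => - phi x) \o Taff a b.
    by apply/funext => x /=; rewrite mulN1r.
  apply: (Eg_le rad (Lip1_good ab (Lip1N phi_Lip1)) gp).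
  move=> x /=; have := Lip1_le_phi hpsi (Taff a b x); rewrite ler_norml; lra.
apply: (Eg_le rad gp gf) => x /=; have := Lip1_le_phi hpsi (Taff a b x); rewrite ler_norml; lra.
Qed.

Lemma cm_le_sm (mu : {measure set R -> \bar R}) l r a b : radon mu -> a < b ->
  Eg mu (@phi R \o Taff a b) <= fine (mu (bitv l r a b)).
Proof.
move=> rad ab.
have gf := Lip1_good ab phi_Lip1.
rewrite -lee_fin -bitv_fin //.
rewrite -[X in (_ <= X)%E]mul1e.
apply: (Eg_le_meas rad gf (bitv_meas _ _ _ _)) => //.
- by move=> x; apply: phi_ge0.
- move=> x hx; have [_ _ gz] := gf; apply: gz => h; apply: hx; exact: bitv_in.
- by move=> x /=; have := phi_le_half (Taff a b x); lra.
Qed.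

Lemma part12 (mu nu : {measure set R -> \bar R}) : radon mu -> radon nu ->
   forall (l r : bool) (a b : R), a < b ->
     (alpha_s mu nu l r a b <= 2%:E)%E /\
     ((0 < nu (bitv l r a b))%E -> (0 < muI nu l r a b (@phi R))%E ->
      (alpha_s mu nu l r a b <=
         (2 / fine (muI nu l r a b (@phi R)))%:E * alpha mu nu l r a b)%E).
Proof.
move=> radm radn l r a b ab.
have hm := Eg_abs_le radm ab; have hn := Eg_abs_le radn ab; have hphi := phi_Lip1.
split.
  apply: ub_ereal_sup => _ [psi hpsi <-].
  rewrite !muphiI_E // -EFinB abse_EFin lee_fin.
  have h1 := Phi_le1 (hm _ hpsi); have h2 := Phi_le1 (hn _ hpsi).
  apply: (le_trans (ler_normB _ _)); lra.
rewrite (muI_E radn l r ab phi_Lip1) /= => hs hN.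
rewrite lte_fin in hN.
move: hs; rewrite (bitv_fin radn) lte_fin => hs.
apply: ub_ereal_sup => _ [psi hpsi <-].
rewrite !muphiI_E // -EFinB abse_EFin.
have hA1 := W1_ge (muI mu l r a b) (muI nu l r a b) hpsi.
have hA2 := W1_ge (muI mu l r a b) (muI nu l r a b) phi_Lip1.
rewrite !muI_E // in hA1 hA2.
rewrite -[X in (`|X| <= _)%E]EFinB abse_EFin in hA1.
rewrite -[X in (`|X| <= _)%E]EFinB abse_EFin in hA2.
have H := part2_real (hm _ hpsi) (cm_le_sm l r radm ab) (hn _ hpsi) hs hN.
rewrite -lee_fin in H; apply: (le_trans H).
rewrite EFinM; apply: lee_wpmul2l.
  by rewrite lee_fin; apply: divr_ge0 => //; apply: ltW.
by rewrite /alpha EFin_max ge_max hA1 hA2.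
Qed.
Lemma bitv_incl lI rI lJ rJ (aI bI aJ bJ : R) : aI < bI ->
  bitv lI rI aI bI `<=` bitv lJ rJ aJ bJ -> aJ <= aI /\ bI <= bJ.
Proof.
move=> ab hs; split.
  case: (leP aJ aI) => // h; exfalso.
  have [x [hx1 hx2]] : exists x, aI < x < bI /\ x < aJ.
    case: (leP aJ bI) => h2.
      by exists ((aI + aJ) / 2); split; [apply/andP; split|]; lra.
    by exists ((aI + bI) / 2); split; [apply/andP; split|]; lra.
  have := bitv_sub (hs _ (bitv_in lI rI hx1)).
  rewrite /= in_itv /= => /andP[h3 _]; lra.
case: (leP bI bJ) => // h; exfalso.
have [x [hx1 hx2]] : exists x, aI < x < bI /\ bJ < x.
  case: (leP aI bJ) => h2.
    by exists ((bI + bJ) / 2); split; [apply/andP; split|]; lra.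
  by exists ((aI + bI) / 2); split; [apply/andP; split|]; lra.
have := bitv_sub (hs _ (bitv_in lI rI hx1)).
rewrite /= in_itv /= => /andP[_ h3]; lra.
Qed.

Definition chi (aI bI aJ bJ : R) (psi : R -> R) (y : R) : R :=
  (bI - aI) / (bJ - aJ) * psi (Taff aI bI (aJ + y * (bJ - aJ))).

Lemma chi_comp aI bI aJ bJ psi x : aJ < bJ ->
  chi aI bI aJ bJ psi (Taff aJ bJ x) = (bI - aI) / (bJ - aJ) * psi (Taff aI bI x).
Proof.
move=> ab; rewrite /chi; congr (_ * psi (Taff _ _ _)).
rewrite /Taff divfK; first by rewrite addrC subrK.
by rewrite subr_eq0 gt_eqF.
Qed.

Lemma chi_Lip1 aI bI aJ bJ psi : aI < bI -> aJ < bJ -> aJ <= aI -> bI <= bJ ->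
  Lip1 psi -> Lip1 (chi aI bI aJ bJ psi).
Proof.
move=> abI abJ ha hb [Hl Hs].
have dI : 0 < bI - aI by lra.
have dJ : 0 < bJ - aJ by lra.
split.
  move=> y1 y2; rewrite /chi -mulrBr normrM ger0_norm; last by apply: divr_ge0; lra.
  apply: (le_trans (ler_wpM2l _ (Hl _ _))); first by apply: divr_ge0; lra.
  rewrite Taff_lip //.
  have -> : aJ + y1 * (bJ - aJ) - (aJ + y2 * (bJ - aJ)) = (y1 - y2) * (bJ - aJ) by ring.
  rewrite normrM (gtr0_norm dJ).
  rewrite [leLHS](_ : _ = `|y1 - y2|) //.
  by field; rewrite !gt_eqF.
move=> y hy; rewrite /chi Hs ?mulr0 // /Taff => /andP[h1 h2].
have : y < 0 \/ 1 < y.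
  case: (ltP y 0) => h; first by left.
  case: (ltP 1 y) => h'; first by right.
  by exfalso; apply: hy; apply/andP.
case => h.
  have hu : aJ + y * (bJ - aJ) < aJ by nra.
  move: h1; rewrite ler_pdivlMr // mul0r; lra.
have hu : bJ < aJ + y * (bJ - aJ) by nra.
move: h2; rewrite ler_pdivrMr // mul1r; lra.
Qed.

Lemma phi_ratio aI bI aJ bJ x : aI < bI -> aJ < bJ -> aJ <= aI -> bI <= bJ ->
  (bI - aI) / (bJ - aJ) * phi (Taff aI bI x) <= phi (Taff aJ bJ x) :> R.
Proof.
move=> abI abJ ha hb.
have dI : 0 < bI - aI by lra.
have dJ : 0 < bJ - aJ by lra.
set rho := (bI - aI) / (bJ - aJ).
have r0 : 0 < rho by apply: divr_gt0.
set tI := Taff aI bI x; set tJ := Taff aJ bJ x.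
have h1 : rho * tI <= tJ.
  rewrite /rho /tI /tJ /Taff mulrC mulrA divfK ?gt_eqF //.
  by rewrite ler_pM2r ?invr_gt0 //; lra.
have h2 : rho * (1 - tI) <= 1 - tJ.
  rewrite /rho /tI /tJ /Taff.
  have -> : 1 - (x - aI) / (bI - aI) = (bI - x) / (bI - aI) by field; rewrite gt_eqF.
  have -> : 1 - (x - aJ) / (bJ - aJ) = (bJ - x) / (bJ - aJ) by field; rewrite gt_eqF.
  rewrite mulrC mulrA divfK ?gt_eqF //.
  by rewrite ler_pM2r ?invr_gt0 //; lra.
case: (phi_cases tI) => [[-> _]|[[-> hI]|[-> hI]]].
- by rewrite mulr0 phi_ge0.
- have h3 : rho * tI <= rho * (1 - tI) by rewrite ler_pM2l //; lra.
  case: (phi_cases tJ) => [[-> [?|?]]|[[-> ?]|[-> ?]]]; lra.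
- have h3 : rho * (1 - tI) <= rho * tI by rewrite ler_pM2l //; lra.
  case: (phi_cases tJ) => [[-> [?|?]]|[[-> ?]|[-> ?]]]; lra.
Qed.

Definition ballR (x r : R) := [set y : R | `|x - y| < r].

Lemma ballR_itv x r : ballR x r = [set` `]x - r, x + r[].
Proof.
by rewrite /ballR; apply/seteqP; split => y /=; rewrite in_itv /= ltr_distlC.
Qed.

Lemma ballR_meas x r : measurable (ballR x r).
Proof. by rewrite ballR_itv; apply: measurable_itv. Qed.

Lemma ballR_sub x r r' : r <= r' -> ballR x r `<=` ballR x r'.
Proof. by move=> h y /= hy; apply: lt_le_trans h. Qed.

Lemma doubling_iter (nu : {measure set R -> \bar R}) (D : R) : 0 <= D -> doubling nu D ->
  forall (k : nat) x r, 0 < r -> (nu (ballR x (2 ^+ k * r)) <= (D ^+ k)%:E * nu (ballR x r))%E.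
Proof.
move=> D0 hd; elim => [|k IH] x r r0.
  by rewrite expr0 mul1r mul1e.
rewrite exprS -mulrA exprS EFinM -muleA.
apply: (le_trans (hd x _ _)); first by rewrite mulr_gt0 // exprn_gt0.
by apply: lee_wpmul2l; [rewrite lee_fin|exact: IH].
Qed.

Lemma doubling_max (nu : {measure set R -> \bar R}) (D : R) : doubling nu D -> doubling nu (Num.max D 1).
Proof.
move=> hd x r r0; apply: (le_trans (hd x r r0)).
apply: lee_wpmul2r; first exact: measure_ge0.
by rewrite lee_fin le_max lexx.
Qed.
Lemma part3 (D theta : R) : 0 < theta ->
   exists C : R, forall (mu nu : {measure set R -> \bar R}),
     radon mu -> radon nu -> doubling nu D ->
     forall (lI rI lJ rJ : bool) (aI bI aJ bJ : R),
       aI < bI -> aJ < bJ ->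
       bitv lI rI aI bI `<=` bitv lJ rJ aJ bJ ->
       theta * (bJ - aJ) <= bI - aI ->
       (alpha_s mu nu lI rI aI bI <= C%:E * alpha_s mu nu lJ rJ aJ bJ)%E.
Proof.
move=> th0.
set D' := Num.max D 1.
have D'1 : 1 <= D' by rewrite le_max lexx orbT.
have D'0 : 0 <= D' by lra.
have [k hk] : exists k : nat, 4 / theta <= 2 ^+ k.
  exists (Num.truncn (4 / theta)).+1.
  apply: (le_trans (ltW (truncnS_gt _))).
  by rewrite -natrX ler_nat; apply/ltnW/ltn_expl.
set L := Num.max 1 (4 * D' ^+ k / theta).
have L1 : 1 <= L by rewrite le_max lexx.
have LL : 4 * D' ^+ k / theta <= L by rewrite le_max lexx orbT.
exists (2 * L).
move=> mu nu radm radn hdbl lI rI lJ rJ aI bI aJ bJ abI abJ hsub hth.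
have [haJ hbJ] := bitv_incl abI hsub.
have dI : 0 < bI - aI by lra.
have dJ : 0 < bJ - aJ by lra.
set rho := (bI - aI) / (bJ - aJ).
have rho0 : 0 < rho by apply: divr_gt0.
have rhoth : theta <= rho by rewrite /rho ler_pdivlMr.
have rhoz : rho != 0 by rewrite gt_eqF.
have hphi := phi_Lip1.
have Etr : forall (m : {measure set R -> \bar R}), radon m -> forall psi, Lip1 psi ->
   Eg m (chi aI bI aJ bJ psi \o Taff aJ bJ) = rho * Eg m (psi \o Taff aI bI).
  move=> m rm psi hp.
  have -> : chi aI bI aJ bJ psi \o Taff aJ bJ = (fun x => rho * (psi \o Taff aI bI) x).
    by apply/funext => x /=; rewrite chi_comp.
  by rewrite (Eg_Z rm rho (Lip1_good abI hp)).
have hchi : forall psi, Lip1 psi -> Lip1 (chi aI bI aJ bJ psi).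
  by move=> psi hp; apply: chi_Lip1.
have hYc : forall m, radon m ->
    Eg m (chi aI bI aJ bJ (@phi R) \o Taff aJ bJ) <= Eg m (@phi R \o Taff aJ bJ).
  move=> m rm; apply: (Eg_le rm (Lip1_good abJ (hchi _ hphi)) (Lip1_good abJ hphi)).
  by move=> x /=; rewrite chi_comp //; apply: phi_ratio.
have hXY : forall m, radon m -> forall psi, Lip1 psi ->
    `|Eg m (chi aI bI aJ bJ psi \o Taff aJ bJ)| <= Eg m (chi aI bI aJ bJ (@phi R) \o Taff aJ bJ).
  move=> m rm psi hp; rewrite !Etr // normrM (gtr0_norm rho0) ler_pM2l //.
  exact: Eg_abs_le.
have hL : Eg nu (@phi R \o Taff aJ bJ) <= L * Eg nu (chi aI bI aJ bJ (@phi R) \o Taff aJ bJ).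
  rewrite Etr //.
  set cI := Eg nu (@phi R \o Taff aI bI).
  set cJ := Eg nu (@phi R \o Taff aJ bJ).
  have cI0 : 0 <= cI by apply: le_trans (Eg_abs_le radn abI hphi); apply: normr_ge0.
  set m := (aI + bI) / 2.
  set r0 := theta * (bJ - aJ) / 4.
  have r00 : 0 < r0 by rewrite /r0; apply: divr_gt0 => //; apply: mulr_gt0.
  have hcI : ((1/4)%:E * nu (ballR m r0) <= cI%:E)%E.
    apply: (Eg_ge_meas radn (Lip1_good abI hphi) (ballR_meas _ _)) => //.
    - by move=> x; exact: phi_ge0.
    - move=> x; rewrite /ballR /= ltr_distlC => /andP[hx1 hx2].
      have hr : r0 <= (bI - aI) / 4 by rewrite /r0 ler_pM2r //; lra.
      rewrite /m in hx1 hx2.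
      set t := Taff aI bI x.
      have ht1 : 1/4 <= t by rewrite /t /Taff ler_pdivlMr //; lra.
      have ht2 : t <= 3/4 by rewrite /t /Taff ler_pdivrMr //; lra.
      case: (phi_cases t) => [[-> [?|?]]|[[-> ?]|[-> ?]]]; lra.
  have hcJ : (cJ%:E <= 1%:E * nu (ballR m (bJ - aJ)))%E.
    apply: (Eg_le_meas radn (Lip1_good abJ hphi) (ballR_meas _ _)) => //.
    - by move=> x; exact: phi_ge0.
    - move=> x /= hx; apply: phi_out.
      have : bJ - aJ <= `|m - x| by rewrite leNgt; apply/negP; exact: hx.
      rewrite ler_normr /m => /orP[h|h].
        by left; rewrite /Taff pmulr_lle0 ?invr_gt0 //; lra.
      by right; rewrite /Taff ler_pdivlMr //; lra.
    - by move=> x /=; have := phi_le_half (Taff aJ bJ x); lra.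
  have hdb : (nu (ballR m (bJ - aJ)) <= (D' ^+ k)%:E * nu (ballR m r0))%E.
    apply: le_trans (doubling_iter D'0 (doubling_max hdbl) k m r00).
    apply: le_measure; rewrite ?inE; [exact: ballR_meas|exact: ballR_meas|apply: ballR_sub].
    have h4 : 4 <= 2 ^+ k * theta by rewrite -ler_pdivrMr.
    rewrite /r0.
    have -> : 2 ^+ k * (theta * (bJ - aJ) / 4) = (2 ^+ k * theta) * (bJ - aJ) / 4 by rewrite !mulrA.
    rewrite ler_pdivlMr //; nra.
  have hBs : (nu (ballR m r0) <= (4 * cI)%:E)%E.
    have e : 4 * (1/4) = 1 :> R by field.
    have -> : nu (ballR m r0) = (4%:E * ((1/4)%:E * nu (ballR m r0)))%E.
      by rewrite muleA -EFinM e mul1e.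
    by rewrite (EFinM 4 cI); apply: lee_wpmul2l.
  have hfin : (cJ%:E <= (D' ^+ k * (4 * cI))%:E)%E.
    rewrite mul1e in hcJ.
    apply: (le_trans hcJ); apply: (le_trans hdb).
    by rewrite (EFinM (D' ^+ k)); apply: lee_wpmul2l => //; rewrite lee_fin exprn_ge0.
  rewrite lee_fin in hfin; apply: (le_trans hfin).
  have e1 : D' ^+ k * (4 * cI) = (4 * D' ^+ k / theta) * (theta * cI).
    by field; rewrite gt_eqF.
  rewrite e1; apply: ler_pM => //.
  - by apply: divr_ge0; [apply: mulr_ge0 => //; apply: exprn_ge0|apply: ltW].
  - by apply: mulr_ge0 => //; apply: ltW.
  - by apply: ler_wpM2r.
apply: ub_ereal_sup => _ [psi hpsi <-].
rewrite (muphiI_E radm lI rI abI hpsi) (muphiI_E radn lI rI abI hpsi).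
rewrite -(Phi_scale _ _ rhoz) -(Phi_scale (Eg nu _) _ rhoz) -!Etr //.
have H := part3_real (hXY mu radm psi hpsi) (hYc mu radm) (hXY nu radn psi hpsi) (hYc nu radn) hL L1.
rewrite -EFinB abse_EFin; rewrite -lee_fin in H; apply: (le_trans H).
rewrite EFinM; apply: lee_wpmul2l; first by rewrite lee_fin; lra.
have W : forall psi', Lip1 psi' -> (`|muphiI mu lJ rJ aJ bJ psi' - muphiI nu lJ rJ aJ bJ psi'| <= alpha_s mu nu lJ rJ aJ bJ)%E.
  by move=> psi' hp; apply: W1_ge.
have h1 := W _ (hchi _ hpsi).
have h2 := W _ (hchi _ hphi).
have h3 := W _ hphi.
rewrite (muphiI_E radm lJ rJ abJ (hchi _ hpsi)) (muphiI_E radn lJ rJ abJ (hchi _ hpsi)) in h1.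
rewrite (muphiI_E radm lJ rJ abJ (hchi _ hphi)) (muphiI_E radn lJ rJ abJ (hchi _ hphi)) in h2.
rewrite (muphiI_E radm lJ rJ abJ hphi) (muphiI_E radn lJ rJ abJ hphi) in h3.
rewrite -[X in (`|X| <= _)%E]EFinB abse_EFin in h1.
rewrite -[X in (`|X| <= _)%E]EFinB abse_EFin in h2.
rewrite -[X in (`|X| <= _)%E]EFinB abse_EFin in h3.
by rewrite !EFin_max !ge_max h1 h2 h3.
Qed.
End S.

Theorem mainTheorem9 (R : realType) :
  (forall (mu nu : {measure set R -> \bar R}), radon mu -> radon nu ->
   forall (l r : bool) (a b : R), a < b ->
     (alpha_s mu nu l r a b <= 2%:E)%E /\
     ((0 < nu (bitv l r a b))%E -> (0 < muI nu l r a b (@phi R))%E ->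
      (alpha_s mu nu l r a b <=
         (2 / fine (muI nu l r a b (@phi R)))%:E * alpha mu nu l r a b)%E)) /\
  (forall (D theta : R), 0 < theta ->
   exists C : R, forall (mu nu : {measure set R -> \bar R}),
     radon mu -> radon nu -> doubling nu D ->
     forall (lI rI lJ rJ : bool) (aI bI aJ bJ : R),
       aI < bI -> aJ < bJ ->
       bitv lI rI aI bI `<=` bitv lJ rJ aJ bJ ->
       theta * (bJ - aJ) <= bI - aI ->
       (alpha_s mu nu lI rI aI bI <= C%:E * alpha_s mu nu lJ rJ aJ bJ)%E).
Proof. by split; [exact: part12 | exact: part3]. Qed.
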